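(* Let $X$ be a CLP-compact (Hausdorff) space with a dense discrete subspace $Y$, and let $Z\subset X$ be a set with $Z\setminus Y$ finite. Then the closure $\overline{Z}$ of $Z$ in $X$ is countably compact at $Z$. Moreover, if $\overline{Z}\setminus Z$ is compact, then $\overline{Z}$ is compact.
   Context: A space is CLP-compact if every cover by clopen sets has a finite subcover. A space $W$ is countably compact at a subset $A\subset W$ if every infinite subset $B\subset A$ has an accumulation point in $W$. *)

(* Defs.v *)
From HB Require Import structures.
From mathcomp Require Import all_boot all_order all_algebra.
From mathcomp Require Import all_classical all_reals all_analysis.
Set Implicit Arguments. Unset Strict Implicit. Unset Printing Implicit Defensive.
Local Open Scope classical_set_scope.

Definition CLP_compact (X : topologicalType) : Prop :=
  forall C : set (set X),
    (forall A, C A -> clopen A) ->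
    \bigcup_(A in C) A = setT ->
    exists F : set (set X),
      [/\ finite_set F, F `<=` C & \bigcup_(A in F) A = setT].

Definition discrete_subspace (X : topologicalType) (Y : set X) : Prop :=
  forall y, Y y -> exists U : set X, open U /\ U `&` Y = [set y].

Definition countably_compact_at (X : topologicalType) (W A : set X) : Prop :=
  forall B : set X, B `<=` A -> infinite_set B ->
    exists x, W x /\ limit_point B x.

(* Main.v *)
Require Import Defs.
From HB Require Import structures.
From mathcomp Require Import all_boot all_order all_algebra.
From mathcomp Require Import all_classical all_reals all_analysis.
From mathcomp Require Import finmap.
Local Open Scope classical_set_scope.

Definition PX (X : topologicalType) (x0 : X) : Type := X.
HB.instance Definition _ X x0 := Topological.on (@PX X x0).
HB.instance Definition _ X x0 := isPointed.Build (@PX X x0) x0.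

Lemma compact_cover_gen (X : topologicalType) (A : set X) :
  compact A <-> cover_compact A.
Proof.
have [[x0 _]|A0] := pselect (A !=set0); last first.
  have -> : A = set0 by apply/seteqP; split => x // Ax; apply: A0; exists x.
  split => _; last exact: compact0.
  by move=> I D f _ _; exists fset0%fset => // x.
  have E := @compact_cover (@PX X x0).
  split => h.
    have : cover_compact (A : set (PX X x0)) by rewrite -E.
    exact.
  have : compact (A : set (PX X x0)) by rewrite E.
  exact.
Qed.

Lemma singleton_open (X : topologicalType) (hX : hausdorff_space X)
  (Y : set X) (denseY : dense Y) (discY : discrete_subspace Y) y :
  Y y -> open [set y].
Proof.
move=> Yy; have [U [oU UY]] := discY y Yy.
have Uy : U y.
  have : (U `&` Y) y by rewrite UY.
  by case.
suff -> : [set y] = U by [].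
apply/seteqP; split=> [x -> //|x Ux].
apply: contrapT => xy.
have cy : closed [set y] := @accessible_closed_set1 _ (hausdorff_accessible hX) y.
have oO : open (U `&` ~` [set y]) := openI oU (closed_openC cy).
have [z [[Uz nzy] Yz]] := denseY _ (ex_intro _ x (conj Ux xy)) oO.
have : (U `&` Y) z by [].
by rewrite UY.
Qed.

Lemma no_limit_finite (X : topologicalType) (hX : hausdorff_space X)
  (clpX : CLP_compact X) (Y : set X) (denseY : dense Y)
  (discY : discrete_subspace Y) (S : set X) :
  S `<=` Y -> (forall x, ~ limit_point S x) -> finite_set S.
Proof.
move=> SY nolim.
have sopen : forall s, S s -> open [set s].
  by move=> s Ss; exact: (@singleton_open _ hX _ denseY discY _ (SY _ Ss)).
have sclosed : forall s : X, closed [set s].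
  by move=> s; exact: (@accessible_closed_set1 _ (hausdorff_accessible hX) s).
have oS : open S.
  have -> : S = \bigcup_(s in S) [set s].
    by apply/seteqP; split=> [x Sx|x [s Ss ->]] //; exists x.
  by apply: bigcup_open => s Ss; exact: sopen.
have oCS : open (~` S).
  rewrite openE => x nSx.
  have := nolim x => /existsNP[U /not_implyP[nU nE]].
  apply: filterS nU => z Uz Sz.
  have [zx|zx] := pselect (z = x); first by subst; exact: nSx.
  by apply: nE; exists z; split => //; apply/eqP.
pose C := [set A : set X | A = ~` S \/ exists2 s, S s & A = [set s]].
have [F [finF FC cov]] : exists F : set (set X),
    [/\ finite_set F, F `<=` C & \bigcup_(A in F) A = setT].
  apply: clpX.
    move=> A [->|[s Ss ->]]; split => //.
    - by rewrite -openC setCK.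
    - exact: sopen.
  apply/seteqP; split => // x _.
  have [Sx|nSx] := pselect (S x).
    by exists [set x] => //; right; exists x.
  by exists (~` S) => //; left.
apply: (sub_finite_set (B := \bigcup_(A in F) (A `&` S))).
  move=> s Ss; have : (\bigcup_(A in F) A) s by rewrite cov.
  by case=> A FA As; exists A.
apply: bigcup_finite => // A FA.
case: (FC _ FA) => [->|[s _ ->]].
  apply: (sub_finite_set (B := set0)); last exact: finite_set0.
  by move=> x [].
by apply: finite_setIl; exact: finite_set1.
Qed.

Theorem lemma2p1 (X : topologicalType) (hX : hausdorff_space X)
  (clpX : CLP_compact X) (Y : set X) (denseY : dense Y)
  (discY : discrete_subspace Y) (Z : set X)
  (finZY : finite_set (Z `\` Y)) :
  countably_compact_at (closure Z) Z /\
  (compact (closure Z `\` Z) -> compact (closure Z)).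
Proof.
split.
  move=> B BZ infB.
  have infB' : infinite_set (B `&` Y).
    move=> finB'; apply: infB.
    apply: (sub_finite_set (B := (B `&` Y) `|` (Z `\` Y))); last by rewrite finite_setU.
    move=> x Bx; have [Yx|nYx] := pselect (Y x); [left|right] => //.
    by split => //; exact: BZ.
  have [x limx] : exists x, limit_point (B `&` Y) x.
    apply: contrapT => nex; apply: infB'.
    apply: (@no_limit_finite _ hX clpX _ denseY discY _) => [y [] //|y limy].
    by apply: nex; exists y.
  exists x; split.
    move=> U nU; have [y [_ [By _] Uy]] := limx U nU.
    by exists y; split => //; exact: BZ.
  by move=> U nU; have [y [yx [By _] Uy]] := limx U nU; exists y.
move=> cK; apply/compact_cover_gen => I D f oF cov.
have sub1 : (closure Z `\` Z) `|` (Z `\` Y) `<=` closure Z.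
  by move=> x [[]//|[Zx _]]; exact: subset_closure.
have cT : compact ((closure Z `\` Z) `|` (Z `\` Y)).
  by apply: compactU => //; exact: finite_compact.
move: cT => /compact_cover_gen cT.
have [D1 D1D cov1] := cT I D f oF (subset_trans sub1 cov).
pose V := cover [set` D1] f.
have oV : open V.
  by apply: bigcup_open => i Di; apply: oF; move: (D1D _ Di); rewrite in_setE.
pose S := closure Z `\` V.
have cS : closed S.
  by rewrite /S setDE; apply: closedI; [exact: closed_closure|exact: open_closedC].
have SY : S `<=` Y.
  move=> x [cZx nVx]; apply: contrapT => nYx.
  have [Zx|nZx] := pselect (Z x).
    by apply: nVx; apply: cov1; right.
  by apply: nVx; apply: cov1; left.
have finS : finite_set S.
  apply: (@no_limit_finite _ hX clpX _ denseY discY _ SY) => x limx.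
  have Sx : S x.
    rewrite (closure_id S).1 //.
    by move=> U nU; have [y [_ Sy Uy]] := limx U nU; exists y.
  have nx : nbhs x [set x].
    by apply: open_nbhs_nbhs; split => //; exact: (@singleton_open _ hX _ denseY discY _ (SY _ Sx)).
  by have [y [yx _ yx']] := limx _ nx; rewrite yx' eqxx in yx.
have cS' : compact S by exact: finite_compact.
move: cS' => /compact_cover_gen cS'.
have [D2 D2D cov2] := cS' I D f oF (fun x Sx => cov x Sx.1).
exists (D1 `|` D2)%fset.
  by move=> i; rewrite in_fsetU => /orP[/D1D|/D2D].
move=> x cZx.
have [Vx|nVx] := pselect (V x).
  case: Vx => i D1i fx; exists i => //; rewrite /= in_fsetU; apply/orP; left; exact: D1i.
case: (cov2 x (conj cZx nVx)) => i D2i fx; exists i => //; rewrite /= in_fsetU; apply/orP; right; exact: D2i.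
Qed.
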